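(* Let $A$ be an approximately semi-amenable Banach algebra with a central multiplier-bounded approximate identity, and let $B$ be a Banach function algebra which has a multiplier-bounded approximate identity consisting of elements of finite support. Then the projective tensor product $A\widehat{\otimes}B$ is approximately semi-amenable.
   Context: A Banach function algebra $B$ here is a Banach algebra of complex-valued functions on a set $S$ with pointwise operations; an element has finite support if it vanishes outside a finite subset of $S$. A multiplier-bounded approximate identity of a Banach algebra $C$ is a net $(u_\alpha)$ in $C$ with $u_\alpha c\to c$ for all $c\in C$ and a constant $M$ with $\|u_\alpha c\|\le M\|c\|$ for all $\alpha,c$; it is central if each $u_\alpha$ lies in the centre of $C$. $A\widehat{\otimes}B$ is the Banach algebra with product $(a\otimes b)(a'\otimes b')=aa'\otimes bb'$. For a Banach algebra $C$ and Banach $C$-bimodule $X$, $X^*$ has the dual structure $\langle c\cdot f,x\rangle=\langle f,x\cdot c\rangle$, $\langle f\cdot c,x\rangle=\langle f,c\cdot x\rangle$; a derivation is a linear $D:C\to X^*$ with $D(cd)=c\cdot D(d)+D(c)\cdot d$; it is approximately semi-inner if there are nets $(\xi_i),(\eta_i)$ in $X^*$ with $D(c)=\lim_i(c\cdot\xi_i-\eta_i\cdot c)$ in norm for all $c$. $C$ is approximately semi-amenable if for every Banach $C$-bimodule $X$ every continuous derivation $C\to X^*$ is approximately semi-inner. *)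

(* Defs.v *)
From mathcomp Require Import all_boot all_order all_algebra.
From mathcomp Require Import complex.
From mathcomp Require Import all_classical all_reals all_analysis.
Import numFieldNormedType.Exports.
Import Order.TTheory GRing.Theory Num.Theory.

Set Implicit Arguments.
Unset Strict Implicit.
Unset Printing Implicit Defensive.

Local Open Scope ring_scope.
Local Open Scope classical_set_scope.

Section BanachDefs.
Context {R : realType}.
Local Notation C := (R[i]).

Definition linear_map (U V : lmodType C) (f : U -> V) : Prop :=
  (forall u u', f (u + u') = f u + f u') /\ (forall (k : C) u, f (k *: u) = k *: f u).

Definition bilinear_map (U V W : lmodType C) (f : U -> V -> W) : Prop :=
  (forall u u' v, f (u + u') v = f u v + f u' v) /\
  (forall (k : C) u v, f (k *: u) v = k *: f u v) /\
  (forall u v v', f u (v + v') = f u v + f u v') /\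
  (forall (k : C) u v, f u (k *: v) = k *: f u v).

Definition bounded_map (U V : normedModType C) (f : U -> V) : Prop :=
  exists K : C, forall u, `|f u| <= K * `|u|.

Definition banach_algebra (A : completeNormedModType C) (m : A -> A -> A) : Prop :=
  bilinear_map m /\ (forall a b c, m a (m b c) = m (m a b) c) /\
  (forall a b, `|m a b| <= `|a| * `|b|).

Definition directed (I : Type) (le : I -> I -> Prop) : Prop :=
  inhabited I /\ (forall i, le i i) /\ (forall i j k, le i j -> le j k -> le i k) /\
  (forall i j, exists k, le i k /\ le j k).

Definition mb_approx_identity (A : completeNormedModType C) (m : A -> A -> A)
    (I : Type) (le : I -> I -> Prop) (u : I -> A) : Prop :=
  (forall c (eps : C), 0 < eps ->
     exists i0, forall i, le i0 i -> `|m (u i) c - c| < eps) /\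
  (exists M : C, forall i c, `|m (u i) c| <= M * `|c|).

Definition has_central_mbai (A : completeNormedModType C) (m : A -> A -> A) : Prop :=
  exists (I : Type) (le : I -> I -> Prop) (u : I -> A),
    [/\ directed le, mb_approx_identity m le u &
        forall i d, m (u i) d = m d (u i)].

Definition banach_bimodule (A : completeNormedModType C) (m : A -> A -> A)
    (X : completeNormedModType C) (l : A -> X -> X) (r : X -> A -> X) : Prop :=
  [/\ bilinear_map l, bilinear_map r,
      (forall a b x, l (m a b) x = l a (l b x)) /\
      (forall x a b, r x (m a b) = r (r x a) b),
      (forall a x b, l a (r x b) = r (l a x) b) &
      exists K : C, forall a x, `|l a x| <= K * `|a| * `|x| /\ `|r x a| <= K * `|a| * `|x|].

Definition dual_elt (X : normedModType C) (f : X -> C) : Prop :=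
  (forall x y, f (x + y) = f x + f y) /\ (forall (k : C) x, f (k *: x) = k * f x) /\
  (exists K : C, forall x, `|f x| <= K * `|x|).

(* D : A -> X^* is a continuous derivation for the dual module structure
   <c.f, x> = f(x.c),  <f.c, x> = f(c.x). *)
Definition cont_derivation (A : completeNormedModType C) (m : A -> A -> A)
    (X : completeNormedModType C) (l : A -> X -> X) (r : X -> A -> X)
    (D : A -> X -> C) : Prop :=
  [/\ (forall c, dual_elt (D c)),
      (forall c d x, D (c + d) x = D c x + D d x),
      (forall (k : C) c x, D (k *: c) x = k * D c x),
      (exists K : C, forall c x, `|D c x| <= K * `|c| * `|x|) &
      (forall c d x, D (m c d) x = D d (r x c) + D c (l d x))].

(* D is approximately semi-inner: there are nets (xi_i), (eta_i) in X^* with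
   D(c) = lim_i (c.xi_i - eta_i.c) in the norm of X^* for all c;
   "||D c - (c.xi_i - eta_i.c)||_{X^*} <= eps eventually" is written out. *)
Definition approx_semi_inner (A : completeNormedModType C)
    (X : completeNormedModType C) (l : A -> X -> X) (r : X -> A -> X)
    (D : A -> X -> C) : Prop :=
  exists (I : Type) (le : I -> I -> Prop) (xi eta : I -> X -> C),
    [/\ directed le, (forall i, dual_elt (xi i) /\ dual_elt (eta i)) &
        forall c (eps : C), 0 < eps -> exists i0, forall i, le i0 i ->
          forall x, `|D c x - (xi i (r x c) - eta i (l c x))| <= eps * `|x|].

Definition approx_semi_amenable (A : completeNormedModType C) (m : A -> A -> A) : Prop :=
  forall (X : completeNormedModType C) (l : A -> X -> X) (r : X -> A -> X)
         (D : A -> X -> C),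
    banach_bimodule m l r -> cont_derivation m l r D -> approx_semi_inner l r D.

(* (B, m) is (isomorphic via the injective map ev to) an algebra of complex
   functions on the set S with pointwise operations. *)
Definition banach_function_algebra (B : completeNormedModType C) (m : B -> B -> B)
    (S : Type) (ev : B -> S -> C) : Prop :=
  [/\ banach_algebra m, injective ev,
      (forall f g s, ev (f + g) s = ev f s + ev g s),
      (forall (k : C) f s, ev (k *: f) s = k * ev f s) &
      (forall f g s, ev (m f g) s = ev f s * ev g s)].

Definition finite_support (B : completeNormedModType C) (S : Type)
    (ev : B -> S -> C) (f : B) : Prop :=
  finite_set [set s | ev f s != 0].

Definition has_finsupp_mbai (B : completeNormedModType C) (m : B -> B -> B)
    (S : Type) (ev : B -> S -> C) : Prop :=
  exists (I : Type) (le : I -> I -> Prop) (u : I -> B),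
    [/\ directed le, mb_approx_identity m le u & forall i, finite_support ev (u i)].

(* (T, mT, tens) is the projective tensor product A \hat\otimes B, given by its
   universal property: tens is a contractive bilinear map, every bounded
   bilinear map phi : A x B -> Y into a Banach space extends to a bounded
   linear map on T with the same bound, uniquely; and the product of T is the
   Banach algebra product with (a (x) b)(a' (x) b') = aa' (x) bb'. *)
Definition projective_tensor_product
    (A : completeNormedModType C) (mA : A -> A -> A)
    (B : completeNormedModType C) (mB : B -> B -> B)
    (T : completeNormedModType C) (mT : T -> T -> T) (tens : A -> B -> T) : Prop :=
  [/\ banach_algebra mT, bilinear_map tens,
      (forall a b, `|tens a b| <= `|a| * `|b|) /\
      (forall a b a' b', mT (tens a b) (tens a' b') = tens (mA a a') (mB b b')),
      (forall (Y : completeNormedModType C) (phi : A -> B -> Y) (M : C),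
         bilinear_map phi -> (forall a b, `|phi a b| <= M * `|a| * `|b|) ->
         exists psi : T -> Y, [/\ linear_map psi,
            (forall a b, psi (tens a b) = phi a b) &
            (forall t, `|psi t| <= M * `|t|)]) &
      (forall (Y : completeNormedModType C) (psi1 psi2 : T -> Y),
         linear_map psi1 -> linear_map psi2 -> bounded_map psi1 -> bounded_map psi2 ->
         (forall a b, psi1 (tens a b) = psi2 (tens a b)) -> psi1 = psi2)].

End BanachDefs.

(* Main.v *)
Require Import Defs.
From HB Require Import structures.
From mathcomp Require Import all_boot all_order all_algebra.
From mathcomp Require Import complex.
From mathcomp Require Import all_classical all_reals all_analysis.
From mathcomp Require Import ring.
Import numFieldNormedType.Exports.
Import Order.TTheory GRing.Theory Num.Theory.
Set Implicit Arguments.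
Unset Strict Implicit.
Unset Printing Implicit Defensive.
Local Open Scope ring_scope.
Local Open Scope classical_set_scope.


Lemma directed_prod I J (le1 : I -> I -> Prop) (le2 : J -> J -> Prop) :
  directed le1 -> directed le2 ->
  directed (fun p q : I * J => le1 p.1 q.1 /\ le2 p.2 q.2).
Proof.
move=> [[i0] [r1 [t1 u1]]] [[j0] [r2 [t2 u2]]]; split; first exact: inhabits (i0, j0).
split; first by move=> p; split.
split; first by move=> p q s [? ?] [? ?]; split; [exact: (t1 _ q.1)|exact: (t2 _ q.2)].
move=> p q; have [k1 [? ?]] := u1 p.1 q.1; have [k2 [? ?]] := u2 p.2 q.2.
by exists (k1, k2).
Qed.

Lemma eventually_seq (T : eqType) I (le : I -> I -> Prop) (P : T -> I -> Prop) (cs : seq T) :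
  directed le -> (forall c, c \in cs -> exists i0, forall i, le i0 i -> P c i) ->
  exists i0, forall i, le i0 i -> forall c, c \in cs -> P c i.
Proof.
move=> [[j0] [rf [tr up]]]; elim: cs => [|c cs IH] H.
  by exists j0 => i _ c; rewrite in_nil.
have [i1 H1] := H c (mem_head _ _).
have [i2 H2] : exists i0, forall i, le i0 i -> forall c, c \in cs -> P c i.
  by apply: IH => d dcs; apply: H; rewrite in_cons dcs orbT.
have [k [k1 k2]] := up i1 i2; exists k => i ki d; rewrite in_cons => /orP[/eqP->|dcs].
  by apply: H1; exact: tr ki.
by apply: H2 => //; exact: tr ki.
Qed.

Lemma ge0_norm_eq (K : numDomainType) (a b : K) : 0 <= a -> a <= b -> `|b| = b.
Proof. by move=> a0 ab; rewrite ger0_norm // (le_trans a0 ab). Qed.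


Record closedSub {R : realType} (T : completeNormedModType R[i]) := ClosedSub {
  cpred : T -> Prop;
  cP0 : cpred 0;
  cPD : forall x y, cpred x -> cpred y -> cpred (x + y);
  cPZ : forall (k : R[i]) x, cpred x -> cpred (k *: x);
  cPcl : forall t, (forall d : R[i], 0 < d -> exists y, cpred y /\ `|t - y| < d) -> cpred t }.

Section SubSpace.
Context {R : realType} (T : completeNormedModType R[i]) (Q : closedSub T).
Local Notation P := (cpred Q).
Let P0 := cP0 Q.
Let PD := @cPD _ _ Q.
Let PZ := @cPZ _ _ Q.
Let Pcl := @cPcl _ _ Q.

Record subT := MkS { subv : T; sP : P subv }.

HB.instance Definition _ := gen_eqMixin subT.
HB.instance Definition _ := gen_choiceMixin subT.

Lemma subv_inj : injective subv.
Proof.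
move=> [x px] [y py] /= exy; subst y; congr MkS; exact: Prop_irrelevance.
Qed.

Lemma PN x : P x -> P (- x).
Proof. by move=> px; have := PZ (-1) px; rewrite scaleN1r. Qed.

Definition szero := MkS P0.
Definition sadd (x y : subT) := MkS (PD (sP x) (sP y)).
Definition sopp (x : subT) := MkS (PN (sP x)).
Definition sscale (k : R[i]) (x : subT) := MkS (PZ k (sP x)).

Lemma saddA : associative sadd.
Proof. by move=> x y z; apply: subv_inj; rewrite /= addrA. Qed.
Lemma saddC : commutative sadd.
Proof. by move=> x y; apply: subv_inj; rewrite /= addrC. Qed.
Lemma sadd0 : left_id szero sadd.
Proof. by move=> x; apply: subv_inj; rewrite /= add0r. Qed.
Lemma saddN : left_inverse szero sopp sadd.
Proof. by move=> x; apply: subv_inj; rewrite /= addNr. Qed.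

HB.instance Definition _ := GRing.isZmodule.Build subT saddA saddC sadd0 saddN.

Lemma sscaleA a b v : sscale a (sscale b v) = sscale (a * b) v.
Proof. by apply: subv_inj; rewrite /= scalerA. Qed.
Lemma sscale1 : left_id 1 sscale.
Proof. by move=> x; apply: subv_inj; rewrite /= scale1r. Qed.
Lemma sscaleDr : right_distributive sscale +%R.
Proof. by move=> a x y; apply: subv_inj; rewrite /= scalerDr. Qed.
Lemma sscaleDl v : {morph sscale^~ v: a b / a + b}.
Proof. by move=> a b; apply: subv_inj; rewrite /= scalerDl. Qed.

HB.instance Definition _ := GRing.Zmodule_isLmodule.Build R[i] subT sscaleA sscale1 sscaleDr sscaleDl.

Definition snorm (x : subT) := `|subv x|.
Lemma snormD x y : snorm (x + y) <= snorm x + snorm y.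
Proof. exact: ler_normD. Qed.
Lemma snormZ (l : R[i]) (x : subT) : snorm (l *: x) = `|l| * snorm x.
Proof. exact: normrZ. Qed.
Lemma snorm0 x : snorm x = 0 -> x = 0.
Proof. by move=> /normr0_eq0 h; apply: subv_inj. Qed.

HB.instance Definition _ := Lmodule_isNormed.Build R[i] subT snormD snormZ snorm0.

Lemma normsE (x : subT) : `|x| = `|subv x|.
Proof. by []. Qed.
Lemma subvB (x y : subT) : subv (x - y) = subv x - subv y.
Proof. by []. Qed.

Lemma subT_complete (F : set_system subT) : ProperFilter F -> cauchy F -> cvg F.
Proof.
move=> FF /cauchyP Fc.
have Gc : cauchy (subv @ F).
  apply/cauchy_exP => e e0; have [x Fx] := Fc e e0; exists (subv x).
  rewrite /=; move: Fx; apply: filterS => y; by rewrite -!ball_normE /ball_ /=.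
have /cauchy_cvg Gcv := Gc.
set t := lim (subv @ F) in Gcv.
have Pt : P t.
  apply: Pcl => d d0; move/fcvgrPdist_lt : Gcv => /(_ d d0) Fd.
  have [z /= zd] := @filter_ex _ F _ _ Fd; exists (subv z); split => //; exact: sP.
apply: (cvgP (MkS Pt)); apply/(@fcvgrPdist_lt _ subT F _ (MkS Pt)) => d d0.
have /(_ _ d d0) := proj1 (@cvgrPdist_lt _ T _ F _ subv t) Gcv.
apply: filterS => z /=.
by rewrite normsE subvB.
Qed.

HB.instance Definition _ := Uniform_isComplete.Build subT subT_complete.

End SubSpace.


Section FunAlg.
Context {R : realType} (B : completeNormedModType R[i]) (mB : B -> B -> B)
  (S : Type) (ev : B -> S -> R[i]).
Hypothesis hB : banach_function_algebra mB ev.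

Lemma evD f g s : ev (f + g) s = ev f s + ev g s.
Proof. by case: hB. Qed.
Lemma evZ k f s : ev (k *: f) s = k * ev f s.
Proof. by case: hB. Qed.
Lemma evM f g s : ev (mB f g) s = ev f s * ev g s.
Proof. by case: hB. Qed.
Lemma ev_eq f g : (forall s, ev f s = ev g s) -> f = g.
Proof. by case: hB => _ inj _ _ _ H; apply: inj; apply: funext. Qed.
Lemma ev0 s : ev 0 s = 0.
Proof. by rewrite -(scale0r (0 : B)) evZ mul0r. Qed.
Lemma evN f s : ev (- f) s = - ev f s.
Proof. by rewrite -scaleN1r evZ mulN1r. Qed.
Lemma evB f g s : ev (f - g) s = ev f s - ev g s.
Proof. by rewrite evD evN. Qed.
Lemma ev_sum (I : Type) (r : seq I) (P : pred I) (F : I -> B) s :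
  ev (\sum_(i <- r | P i) F i) s = \sum_(i <- r | P i) ev (F i) s.
Proof.
apply: (big_ind2 (fun a b => ev a s = b)); first exact: ev0.
  by move=> a b a' b' <- <-; rewrite evD.
by [].
Qed.
Lemma mBC f g : mB f g = mB g f.
Proof. by apply: ev_eq => s; rewrite !evM mulrC. Qed.

Definition eqv (s x : S) := forall b, ev b s = ev b x.

Definition idem_at (p : B) (x : S) :=
  forall s, ev p s = if `[< eqv s x >] then 1 else 0.

Lemma sep (x : S) (v : B) (xs : nat -> S) (m : nat) :
  exists g : B, [/\ ev g x = ev v x, (forall s, ev v s = 0 -> ev g s = 0) &
    (forall k, (k < m)%N -> ~ eqv (xs k) x -> ev g (xs k) = 0)].
Proof.
elim: m => [|m [g [gx gv gk]]]; first by exists v; split.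
case: (pselect (eqv (xs m) x)) => [em|nem].
  exists g; split => // k; rewrite ltnS leq_eqVlt => /orP[/eqP->|km] //.
  exact: gk.
have [b bne] : exists b, ev b (xs m) <> ev b x.
  by apply/existsNP.
have dne : ev b x - ev b (xs m) != 0 by rewrite subr_eq0; apply/eqP => /esym.
exists ((ev b x - ev b (xs m))^-1 *: (mB g b - ev b (xs m) *: g)).
have E s : ev ((ev b x - ev b (xs m))^-1 *: (mB g b - ev b (xs m) *: g)) s =
   ev g s * ((ev b s - ev b (xs m)) / (ev b x - ev b (xs m))).
  by rewrite evZ evB evM evZ; ring.
split.
- by rewrite E divff // mulr1.
- by move=> s vs; rewrite E gv // mul0r.
- move=> k; rewrite ltnS leq_eqVlt => /orP[/eqP->|km] nk.
    by rewrite E subrr mul0r mulr0.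
  by rewrite E gk // mul0r.
Qed.

Lemma idem_exists (u : B) (x : S) (n : nat) (xs : nat -> S) :
  (forall s, ev u s != 0 -> exists2 k, (k < n)%N & s = xs k) ->
  ev u x != 0 -> exists p, idem_at p x.
Proof.
move=> cov ux.
have [g [gx gv gk]] := sep x ((ev u x)^-1 *: u) xs n.
exists g => s; case: asboolP => [sx|nsx].
  by rewrite (sx g) gx evZ mulVf.
case: (eqVneq (ev u s) 0) => [us|us].
  by apply: gv; rewrite evZ us mulr0.
have [k kn sk] := cov s us; subst s; exact: gk.
Qed.

Lemma idem_props p x : idem_at p x ->
  [/\ mB p p = p, ev p x = 1 & forall b, mB b p = ev b x *: p].
Proof.
move=> ip; split.
- apply: ev_eq => s; rewrite evM ip; case: ifP => _; [exact: mulr1|exact: mulr0].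
- by rewrite ip; case: asboolP => // -[]; move=> b.
- move=> b; apply: ev_eq => s; rewrite evM evZ ip; case: asboolP => [->|_].
    by [].
  by rewrite !mulr0.
Qed.

Lemma decomp (u : B) : Defs.finite_support ev u ->
  exists n (c : nat -> R[i]) (p : nat -> B),
    u = \sum_(k < n) c k *: p k /\ (forall k, c k != 0 -> exists x, idem_at (p k) x).
Proof.
rewrite /Defs.finite_support => /finite_set_leP [n /pfcard_geP [A0|[g]]].
  exists 0%N, (fun _ => 0), (fun _ => 0); split; last by move=> k; rewrite eqxx.
  apply: ev_eq => s; rewrite big_ord0 ev0; apply/eqP/negP => /negP us.
  by have : [set s | ev u s != 0] s by []; rewrite A0.
have cov : forall s, ev u s != 0 -> exists2 k, (k < n)%N & s = g k.
  move=> s us; have : [set s | ev u s != 0] s by [].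
  by move=> /('surj_g) [k kn <-]; exists k.
have ch : forall k : nat, exists q : B, ev u (g k) != 0 -> idem_at q (g k).
  move=> k; case: (eqVneq (ev u (g k)) 0) => uk.
    by exists 0.
  have [q qi] := idem_exists cov uk; by exists q.
have [pf pfP] := choice ch.
pose rep k := forall k', (k' < k)%N -> ~ eqv (g k') (g k).
pose c k := if `[< rep k >] && (ev u (g k) != 0) then ev u (g k) else 0.
exists n, c, pf; split; last first.
  move=> k; rewrite /c; case: ifP => [/andP[_ uk] _|_]; last by rewrite eqxx.
  by exists (g k); apply: pfP.
have eqv_sym a b : eqv a b -> eqv b a by move=> e f; rewrite e.
have eqv_tr a b d : eqv a b -> eqv b d -> eqv a d by move=> e1 e2 f; rewrite e1 e2.
apply: ev_eq => s; rewrite ev_sum; under eq_bigr do rewrite evZ.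
case: (eqVneq (ev u s) 0) => us.
  rewrite us big1 // => k _; rewrite /c; case: ifP => [/andP[_ uk]|_]; last by rewrite mul0r.
  rewrite (pfP k uk); case: asboolP => [e|_]; last by rewrite mulr0.
  by move: uk; rewrite -(e u) us eqxx.
have [k kn sk] := cov s us.
have exP : exists j, `[< eqv (g j) s >] by exists k; apply/asboolP; rewrite -sk.
case: (ex_minnP exP) => k0 /asboolP Pk0 mink0.
have k0n : (k0 < n)%N.
  by apply: leq_ltn_trans kn; apply: mink0; apply/asboolP; rewrite -sk.
rewrite (bigD1 (Ordinal k0n)) //= big1 ?addr0.
  have repk0 : rep k0.
    move=> k' k'k0 e; have : (k0 <= k')%N.
      by apply: mink0; apply/asboolP; exact: eqv_tr e Pk0.
    by rewrite leqNgt k'k0.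
  have uk0 : ev u (g k0) = ev u s by rewrite (Pk0 u).
  rewrite /c; have -> : `[< rep k0 >] by apply/asboolP.
  rewrite uk0 us /= pfP ?uk0 //.
  by case: asboolP => [_|[]]; [rewrite mulr1|apply: eqv_sym].
move=> j jk0; rewrite /c; case: ifP => [/andP[/asboolP rj uj]|_]; last by rewrite mul0r.
rewrite (pfP j uj); case: asboolP => [e|_]; last by rewrite mulr0.
have k0j : (k0 <= j)%N by apply: mink0; apply/asboolP; apply: eqv_sym.
have : (k0 < j)%N.
  rewrite ltn_neqAle k0j andbT; apply/eqP => ej; move: jk0.
  by apply/negP; rewrite negbK; apply/eqP/val_inj.
by move=> /rj []; apply: eqv_tr Pk0 e.
Qed.

End FunAlg.


Lemma lenormK (K : numDomainType) (a k b : K) : 0 <= a -> 0 <= b -> a <= k * b -> a <= `|k| * b.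
Proof.
move=> a0 b0 ab; have kb0 : 0 <= k * b := le_trans a0 ab.
by rewrite -(ger0_norm b0) -normrM ger0_norm.
Qed.

Section Gen.
Context {R : realType}.
Local Notation C := (R[i]).

Section Bil.
Context (U V W : lmodType C) (f : U -> V -> W) (hf : bilinear_map f).
Lemma bilDl u u' v : f (u + u') v = f u v + f u' v. Proof. by case: hf. Qed.
Lemma bilZl k u v : f (k *: u) v = k *: f u v. Proof. by case: hf => _ []. Qed.
Lemma bilDr u v v' : f u (v + v') = f u v + f u v'. Proof. by case: hf => _ [_ []]. Qed.
Lemma bilZr k u v : f u (k *: v) = k *: f u v. Proof. by case: hf => _ [_ []]. Qed.
Lemma bil0l v : f 0 v = 0. Proof. by rewrite -(scale0r (0 : U)) bilZl scale0r. Qed.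
Lemma bil0r u : f u 0 = 0. Proof. by rewrite -(scale0r (0 : V)) bilZr scale0r. Qed.
Lemma bilNl u v : f (- u) v = - f u v. Proof. by rewrite -scaleN1r bilZl scaleN1r. Qed.
Lemma bilNr u v : f u (- v) = - f u v. Proof. by rewrite -scaleN1r bilZr scaleN1r. Qed.
Lemma bilBl u u' v : f (u - u') v = f u v - f u' v. Proof. by rewrite bilDl bilNl. Qed.
Lemma bilBr u v v' : f u (v - v') = f u v - f u v'. Proof. by rewrite bilDr bilNr. Qed.
Lemma bil_sumr (I : Type) (r : seq I) (P : pred I) (F : I -> V) u :
  f u (\sum_(i <- r | P i) F i) = \sum_(i <- r | P i) f u (F i).
Proof.
apply: (big_ind2 (fun a b => f u a = b)); [exact: bil0r| |by []].
by move=> a b a' b' <- <-; rewrite bilDr.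
Qed.
Lemma bil_suml (I : Type) (r : seq I) (P : pred I) (F : I -> U) v :
  f (\sum_(i <- r | P i) F i) v = \sum_(i <- r | P i) f (F i) v.
Proof.
apply: (big_ind2 (fun a b => f a v = b)); [exact: bil0l| |by []].
by move=> a b a' b' <- <-; rewrite bilDl.
Qed.
End Bil.

Section Lin.
Context (U V : lmodType C) (f : U -> V) (hf : linear_map f).
Lemma linD u u' : f (u + u') = f u + f u'. Proof. by case: hf. Qed.
Lemma linZ k u : f (k *: u) = k *: f u. Proof. by case: hf. Qed.
Lemma lin0 : f 0 = 0. Proof. by rewrite -(scale0r (0 : U)) linZ scale0r. Qed.
Lemma linN u : f (- u) = - f u. Proof. by rewrite -scaleN1r linZ scaleN1r. Qed.
Lemma linB u u' : f (u - u') = f u - f u'. Proof. by rewrite linD linN. Qed.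
End Lin.

Section Dual.

Lemma dual_bound' (X : normedModType C) (f : X -> C) : dual_elt f ->
  exists K : C, 0 <= K /\ forall x, `|f x| <= K * `|x|.
Proof.
case=> _ [_ [K HK]]; exists `|K|; split => // x.
by apply: lenormK => //; exact: HK.
Qed.

Lemma dual0 (X : normedModType C) : dual_elt (fun _ : X => 0 : C).
Proof.
split; first by move=> *; rewrite addr0.
split; first by move=> *; rewrite mulr0.
by exists 0 => x; rewrite normr0 mul0r.
Qed.

Lemma dualD (X : normedModType C) (f g : X -> C) : dual_elt f -> dual_elt g -> dual_elt (fun x => f x + g x).
Proof.
move=> hf hg; have [Kf [_ Hf]] := dual_bound' hf; have [Kg [_ Hg]] := dual_bound' hg.
case: hf => fD [fZ _]; case: hg => gD [gZ _].
split; first by move=> x y; rewrite fD gD; ring.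
split; first by move=> k x; rewrite fZ gZ; ring.
exists (Kf + Kg) => x; rewrite mulrDl; apply: le_trans (ler_normD _ _) _.
exact: lerD.
Qed.

Lemma dualZ (X : normedModType C) (f : X -> C) (k : C) : dual_elt f -> dual_elt (fun x => k * f x).
Proof.
move=> hf; have [Kf [_ Hf]] := dual_bound' hf; case: hf => fD [fZ _].
split; first by move=> x y; rewrite fD; ring.
split; first by move=> l x; rewrite fZ; ring.
exists (`|k| * Kf) => x; rewrite normrM -mulrA; apply: ler_wpM2l => //.
Qed.

Lemma dual_comp (X Y : normedModType C) (f : Y -> C) (g : X -> Y) : dual_elt f ->
  (forall x y, g (x + y) = g x + g y) -> (forall (k : C) x, g (k *: x) = k *: g x) ->
  (exists K : C, forall x, `|g x| <= K * `|x|) -> dual_elt (fun x => f (g x)).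
Proof.
move=> hf gD gZ [Kg Hg]; have [Kf [Kf0 Hf]] := dual_bound' hf; case: hf => fD [fZ _].
split; first by move=> x y; rewrite gD fD.
split; first by move=> k x; rewrite gZ fZ.
exists (Kf * Kg) => x; apply: le_trans (Hf _) _; rewrite -mulrA.
exact: ler_wpM2l.
Qed.

Lemma dual_sum (X : normedModType C) n (F : nat -> X -> C) : (forall k, dual_elt (F k)) ->
  dual_elt (fun x => \sum_(k < n) F k x).
Proof.
move=> hF; elim: n => [|n IH].
  by apply: (@eq_ind _ (fun _ => 0)) (@dual0 X) _ _; apply: funext => x; rewrite big_ord0.
apply: (@eq_ind _ (fun x => \sum_(k < n) F k x + F n x)); first exact: dualD.
by apply: funext => x; rewrite big_ord_recr.
Qed.
End Dual.
End Gen.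


Lemma small_mul (K : numFieldType) (k d : K) : 0 <= k -> 0 < d -> exists2 e, 0 < e & k * e <= d.
Proof.
move=> k0 d0; have k1 : 0 < k + 1 by rewrite ltr_wpDl.
exists (d / (k + 1)); first exact: divr_gt0.
by rewrite mulrA ler_pdivrMr // mulrC ler_pM2l // lerDl ler01.
Qed.

Lemma eqle (K : numDomainType) (x y : K) : x = y -> x <= y.
Proof. by move=> ->. Qed.

Lemma bil_linl {R : realType} (U V W : lmodType R[i]) (f : U -> V -> W) v :
  bilinear_map f -> linear_map (fun u => f u v).
Proof. by move=> hf; split => *; [exact: bilDl|exact: bilZl]. Qed.
Lemma bil_linr {R : realType} (U V W : lmodType R[i]) (f : U -> V -> W) u :
  bilinear_map f -> linear_map (fun v => f u v).
Proof. by move=> hf; split => *; [exact: bilDr|exact: bilZr]. Qed.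

Lemma mbai_bound {R : realType} (A : completeNormedModType R[i]) (m : A -> A -> A) I le (e : I -> A) :
  mb_approx_identity m le e -> exists M, 0 <= M /\ forall i c, `|m (e i) c| <= M * `|c|.
Proof.
case=> _ [M HM]; exists `|M|; split => // i c; apply: lenormK => //; exact: HM.
Qed.

Lemma ev_and I (le : I -> I -> Prop) (P Q : I -> Prop) : directed le ->
  (exists i0, forall i, le i0 i -> P i) -> (exists i0, forall i, le i0 i -> Q i) ->
  exists i0, forall i, le i0 i -> P i /\ Q i.
Proof.
move=> [_ [_ [tr up]]] [i1 H1] [i2 H2]; have [k [k1 k2]] := up i1 i2.
by exists k => i ki; split; [apply: H1; exact: tr ki|apply: H2; exact: tr ki].
Qed.

Lemma norm3 (K : numDomainType) (k v a x : K) : 0 <= v -> 0 <= a -> 0 <= x ->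
  v <= k * a * x -> v <= `|k| * a * x.
Proof.
move=> v0 a0 x0 h; rewrite -mulrA; apply: lenormK => //; first exact: mulr_ge0.
by rewrite mulrA.
Qed.

Lemma le3 (K : numDomainType) (k v t a p x : K) : 0 <= k -> 0 <= x -> 0 <= t ->
  v <= k * t * x -> t <= a * p -> v <= k * p * a * x.
Proof.
move=> k0 x0 t0 h tap; apply: le_trans h _.
have -> : k * p * a * x = k * (a * p) * x by ring.
by apply: ler_wpM2r => //; apply: ler_wpM2l.
Qed.

Section Main.
Context (R : realType) (A B T : completeNormedModType R[i])
    (mA : A -> A -> A) (mB : B -> B -> B) (mT : T -> T -> T)
    (S : Type) (ev : B -> S -> R[i]) (tens : A -> B -> T).
Local Notation C := (R[i]).
Hypotheses (hA : banach_algebra mA) (hB : banach_function_algebra mB ev)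
  (hT : projective_tensor_product mA mB mT tens).
Context (IA : Type) (leA : IA -> IA -> Prop) (eA : IA -> A) (dA : directed leA)
  (aiA : mb_approx_identity mA leA eA) (cA : forall i d, mA (eA i) d = mA d (eA i)).
Context (IB : Type) (leB : IB -> IB -> Prop) (uB : IB -> B) (dB : directed leB)
  (aiB : mb_approx_identity mB leB uB) (fB : forall i, Defs.finite_support ev (uB i)).

Let mA_bil : bilinear_map mA. Proof. by case: hA. Qed.
Let mA_norm a b : `|mA a b| <= `|a| * `|b|. Proof. by case: hA => _ []. Qed.
Let mB_bil : bilinear_map mB. Proof. by case: hB => [[]]. Qed.
Let mB_norm a b : `|mB a b| <= `|a| * `|b|. Proof. by case: hB => [[_ []]]. Qed.
Let mT_bil : bilinear_map mT. Proof. by case: hT => [[]]. Qed.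
Let mT_norm a b : `|mT a b| <= `|a| * `|b|. Proof. by case: hT => [[_ []]]. Qed.
Let tens_bil : bilinear_map tens. Proof. by case: hT. Qed.
Let tens_norm a b : `|tens a b| <= `|a| * `|b|. Proof. by case: hT => _ _ []. Qed.
Let tens_mul a b a' b' : mT (tens a b) (tens a' b') = tens (mA a a') (mB b b').
Proof. by case: hT => _ _ []. Qed.
Let T_ext (Y : completeNormedModType C) (phi : A -> B -> Y) (M : C) :
  bilinear_map phi -> (forall a b, `|phi a b| <= M * `|a| * `|b|) ->
  exists psi : T -> Y, [/\ linear_map psi, (forall a b, psi (tens a b) = phi a b) &
     (forall t, `|psi t| <= M * `|t|)].
Proof. by case: hT => _ _ _ H _; exact: H. Qed.
Let T_uniq (Y : completeNormedModType C) (psi1 psi2 : T -> Y) :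
  linear_map psi1 -> linear_map psi2 -> bounded_map psi1 -> bounded_map psi2 ->
  (forall a b, psi1 (tens a b) = psi2 (tens a b)) -> psi1 = psi2.
Proof. by case: hT => _ _ _ _ H; exact: H. Qed.

Let bounded_mTr w : bounded_map (fun t => mT t w).
Proof. by exists `|w| => t; rewrite mulrC. Qed.

Lemma mT_w_bound : exists M, 0 <= M /\ forall i j t,
  `|mT t (tens (eA i) (uB j))| <= M * `|t|.
Proof.
have [MA [MA0 HA]] := mbai_bound aiA; have [MB [MB0 HB]] := mbai_bound aiB.
exists (MA * MB); split; first exact: mulr_ge0.
move=> i j.
pose phi a b := tens (mA a (eA i)) (mB b (uB j)).
have phib : bilinear_map phi.
  split; first by move=> *; rewrite /phi bilDl // bilDl.
  split; first by move=> *; rewrite /phi bilZl // bilZl.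
  split; first by move=> *; rewrite /phi (bilDl mB_bil) bilDr.
  by move=> *; rewrite /phi (bilZl mB_bil) bilZr.
have [|psi [psil psie psib]] := T_ext phib (M := MA * MB).
  move=> a b; apply: le_trans (tens_norm _ _) _.
  rewrite -cA (mBC hB b); apply: le_trans (ler_pM _ _ (HA i a) (HB j b)) _ => //.
  by apply: eqle; ring.
have E : psi = (fun t => mT t (tens (eA i) (uB j))).
  apply: T_uniq => //; [exact: bil_linl|exists (MA * MB); exact: psib|].
  by move=> a b; rewrite psie tens_mul.
by move=> t; have := psib t; rewrite E.
Qed.

Definition lep (g g' : IA * IB) := leA g.1 g'.1 /\ leB g.2 g'.2.
Definition wg (g : IA * IB) := tens (eA g.1) (uB g.2).
Definition Pg t := forall d : C, 0 < d ->
  exists g0, forall g, lep g0 g -> `|t - mT t (wg g)| <= d.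

Let dP : directed lep := directed_prod dA dB.

Lemma Pg0 : Pg 0.
Proof.
move=> d d0; case: dP => [[g0] _]; exists g0 => g _.
by rewrite (bil0l mT_bil) subr0 normr0 ltW.
Qed.

Lemma PgD x y : Pg x -> Pg y -> Pg (x + y).
Proof.
move=> px py d d0; have d20 : 0 < d / 2 by rewrite divr_gt0.
have [g0 Hg0] := ev_and dP (px _ d20) (py _ d20).
exists g0 => g /Hg0 [h1 h2]; rewrite (bilDl mT_bil).
have -> : x + y - (mT x (wg g) + mT y (wg g)) = (x - mT x (wg g)) + (y - mT y (wg g)).
  by rewrite opprD addrACA.
by rewrite [d]splitr; apply: le_trans (ler_normD _ _) _; apply: lerD.
Qed.

Lemma PgZ (k : C) x : Pg x -> Pg (k *: x).
Proof.
move=> px d d0; have [e e0 ke] := small_mul (normr_ge0 k) d0.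
have [g0 Hg0] := px e e0; exists g0 => g /Hg0 h.
rewrite (bilZl mT_bil) -scalerBr normrZ; apply: le_trans ke.
exact: ler_wpM2l.
Qed.

Lemma Pgcl t : (forall d : C, 0 < d -> exists y, Pg y /\ `|t - y| < d) -> Pg t.
Proof.
move=> H d d0; have [M [M0 HM]] := mT_w_bound.
have M2 : 0 <= M + 2 by rewrite addr_ge0.
have [e e0 Me] := small_mul M2 d0.
have [y [py ty]] := H e e0; have [g0 Hg0] := py e e0.
exists g0 => g /Hg0 h.
have -> : t - mT t (wg g) = (t - y) + (y - mT y (wg g)) + mT (y - t) (wg g).
  by rewrite (bilBl mT_bil) !addrA !subrK.
apply: le_trans (ler_normD _ _) _; apply: le_trans Me.
have -> : (M + 2) * e = e + e + M * e by ring.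
apply: lerD; first by apply: le_trans (ler_normD _ _) _; apply: lerD => //; exact: ltW.
apply: le_trans (HM g.1 g.2 _) _; apply: ler_wpM2l => //.
by rewrite distrC ltW.
Qed.

Lemma Pg_tens a b : Pg (tens a b).
Proof.
move=> d d0; have [MA [MA0 HA]] := mbai_bound aiA.
have d20 : 0 < d / 2 by rewrite divr_gt0.
have [e1 e10 H1] := small_mul (normr_ge0 b) d20.
have [e2 e20 H2] := small_mul (mulr_ge0 MA0 (normr_ge0 a)) d20.
have [i0 Hi] := aiA.1 a e1 e10; have [j0 Hj] := aiB.1 b e2 e20.
exists (i0, j0) => g [/Hi h1 /Hj h2]; rewrite /wg tens_mul.
have -> : tens a b - tens (mA a (eA g.1)) (mB b (uB g.2)) =
   tens (a - mA (eA g.1) a) b + tens (mA (eA g.1) a) (b - mB (uB g.2) b).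
  rewrite (bilBl tens_bil) (bilBr tens_bil) -cA (mBC hB b).
  by rewrite addrA addrNK.
rewrite [d]splitr; apply: le_trans (ler_normD _ _) _; apply: lerD.
  apply: le_trans (tens_norm _ _) _; rewrite mulrC; apply: le_trans H1.
  by apply: ler_wpM2l => //; rewrite distrC ltW.
apply: le_trans (tens_norm _ _) _; apply: le_trans H2.
by apply: ler_pM => //; rewrite distrC ltW.


Qed.

Definition QPg := ClosedSub Pg0 PgD PgZ Pgcl.

Lemma Pg_all t : Pg t.
Proof.
pose phi a b : subT QPg := MkS (Q := QPg) (Pg_tens a b).
have phib : bilinear_map phi.
  split; first by move=> *; apply: subv_inj; rewrite /= (bilDl tens_bil).
  split; first by move=> *; apply: subv_inj; rewrite /= (bilZl tens_bil).
  split; first by move=> *; apply: subv_inj; rewrite /= (bilDr tens_bil).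
  by move=> *; apply: subv_inj; rewrite /= (bilZr tens_bil).
have [|psi [psil psie psib]] := T_ext phib (M := 1).
  by move=> a b; rewrite mul1r normsE /=; exact: tens_norm.
have E : (fun t => subv (psi t)) = id.
  apply: T_uniq.
  - by split => *; rewrite ?(linD psil) ?(linZ psil).
  - by split.
  - by exists 1 => u; rewrite -normsE.
  - by exists 1 => u; rewrite mul1r.
  - by move=> a b; rewrite psie.
have -> : t = subv (psi t) by rewrite (congr1 (fun f => f t) E).
exact: (sP (psi t)).
Qed.


Context (X : completeNormedModType C) (l : T -> X -> X) (r : X -> T -> X)
  (D : T -> X -> C).
Hypotheses (hX : banach_bimodule mT l r) (hD : cont_derivation mT l r D)
  (asA : approx_semi_amenable mA).

Let l_bil : bilinear_map l. Proof. by case: hX. Qed.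
Let r_bil : bilinear_map r. Proof. by case: hX. Qed.
Let l_assoc a b x : l (mT a b) x = l a (l b x). Proof. by case: hX => _ _ []. Qed.
Let r_assoc x a b : r x (mT a b) = r (r x a) b. Proof. by case: hX => _ _ []. Qed.
Let lr_mid a x b : l a (r x b) = r (l a x) b. Proof. by case: hX. Qed.
Let lr_bound : exists K, 0 <= K /\ forall a x,
  `|l a x| <= K * `|a| * `|x| /\ `|r x a| <= K * `|a| * `|x|.
Proof.
case: hX => _ _ _ _ [K HK]; exists `|K|; split => // a x.
have [h1 h2] := HK a x; split; exact: norm3.
Qed.
Let D_dual c : dual_elt (D c). Proof. by case: hD. Qed.
Let D_add c d x : D (c + d) x = D c x + D d x. Proof. by case: hD. Qed.
Let D_scal k c x : D (k *: c) x = k * D c x. Proof. by case: hD. Qed.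
Let D_bound : exists K, 0 <= K /\ forall c x, `|D c x| <= K * `|c| * `|x|.
Proof. case: hD => _ _ _ [K HK] _; exists `|K|; split => // c x; exact: norm3. Qed.
Let D_der c d x : D (mT c d) x = D d (r x c) + D c (l d x). Proof. by case: hD. Qed.

Let D0 x : D 0 x = 0.
Proof. by rewrite -(scale0r (0 : T)) D_scal mul0r. Qed.
Let DB c d x : D (c - d) x = D c x - D d x.
Proof. by rewrite D_add -scaleN1r D_scal mulN1r. Qed.

Lemma phi_exists (i : IA) (p : B) (x0 : S) : idem_at ev p x0 ->
  exists Phi : T -> A, forall t, mT t (tens (eA i) p) = tens (Phi t) p.
Proof.
move=> ip; have [mp px pb] := idem_props hB ip.
have [MA [MA0 HA]] := mbai_bound aiA.
have pn0 : 0 < `|p|.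
  rewrite normr_gt0; apply/eqP => p0; move: px; rewrite p0 (ev0 hB) => /eqP.
  by rewrite eq_sym oner_eq0.
have evb b : `|ev b x0| <= `|b|.
  rewrite -(ler_pM2r pn0) -normrZ -pb; exact: mB_norm.
pose phi a b := ev b x0 *: mA a (eA i).
have phib : bilinear_map phi.
  split; first by move=> *; rewrite /phi (bilDl mA_bil) scalerDr.
  split; first by move=> *; rewrite /phi (bilZl mA_bil) !scalerA mulrC.
  split; first by move=> *; rewrite /phi (evD hB) scalerDl.
  by move=> *; rewrite /phi (evZ hB) scalerA.
have [|psi [psil psie psib]] := T_ext phib (M := MA).
  move=> a b; rewrite /phi normrZ -cA.
  apply: le_trans (ler_pM _ _ (evb b) (HA i a)) _ => //.
  by apply: eqle; ring.
exists psi.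
suff E : (fun t => mT t (tens (eA i) p)) = (fun t => tens (psi t) p).
  by move=> t; rewrite (congr1 (fun f => f t) E).
apply: T_uniq => //.
- exact: bil_linl.
- by split => *; rewrite ?(linD psil) ?(linZ psil) ?(bilDl tens_bil) ?(bilZl tens_bil).
- exists (MA * `|p|) => t; apply: le_trans (tens_norm _ _) _.
  rewrite [_ * `|t|]mulrC mulrA; apply: ler_wpM2r => //.
  by rewrite mulrC; exact: psib.
- move=> a b; rewrite tens_mul psie pb /phi (bilZr tens_bil) (bilZl tens_bil).
  by [].
Qed.

Lemma wcomm (i : IA) (p : B) t : mT t (tens (eA i) p) = mT (tens (eA i) p) t.
Proof.
suff E : (fun t => mT t (tens (eA i) p)) = (fun t => mT (tens (eA i) p) t).
  by rewrite (congr1 (fun f => f t) E).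
apply: T_uniq => //; [exact: bil_linl|exact: bil_linr|by exists `|tens (eA i) p| |].
by move=> a b; rewrite !tens_mul cA (mBC hB b).
Qed.

Lemma asi_p (p : B) : mB p p = p ->
  approx_semi_inner (fun a x => l (tens a p) x) (fun x a => r x (tens a p))
    (fun a => D (tens a p)).
Proof.
move=> mp; have tp a b : tens (mA a b) p = mT (tens a p) (tens b p) by rewrite tens_mul mp.
have [K [K0 HK]] := lr_bound; have [KD [KD0 HKD]] := D_bound.
apply: asA; split.
- split; first by move=> *; rewrite (bilDl tens_bil) (bilDl l_bil).
  split; first by move=> *; rewrite (bilZl tens_bil) (bilZl l_bil).
  split; first by move=> *; rewrite (bilDr l_bil).
  by move=> *; rewrite (bilZr l_bil).
- split; first by move=> *; rewrite (bilDl r_bil).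
  split; first by move=> *; rewrite (bilZl r_bil).
  split; first by move=> *; rewrite (bilDl tens_bil) (bilDr r_bil).
  by move=> *; rewrite (bilZl tens_bil) (bilZr r_bil).
- by split => *; rewrite tp ?l_assoc ?r_assoc.
- by move=> *; rewrite lr_mid.
- exists (K * `|p|) => a x; have [h1 h2] := HK (tens a p) x.
  by split; [apply: (le3 _ _ _ h1)|apply: (le3 _ _ _ h2)] => //; exact: tens_norm.
- by move=> c0; exact: (D_dual (tens c0 p)).
- by move=> *; rewrite (bilDl tens_bil) D_add.
- by move=> *; rewrite (bilZl tens_bil) D_scal.
- exists (KD * `|p|) => c x; apply: (le3 _ _ _ (HKD _ _)) => //; exact: tens_norm.
- by move=> *; rewrite tp D_der.
Qed.

Lemma term_approx (i : IA) (k : C) (p : B) (x0 : S) : idem_at ev p x0 ->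
  forall (cs : seq T) (eps : C), 0 < eps -> exists xi eta : X -> C,
  [/\ dual_elt xi, dual_elt eta & forall c, c \in cs -> forall x,
    `|D (mT c (tens (eA i) (k *: p))) x - (xi (r x c) - eta (l c x))| <= eps * `|x|].
Proof.
move=> ip cs eps eps0.
have [mp _ _] := idem_props hB ip.
have [Phi HPhi] := phi_exists i ip.
have [I' [le' [xi [eta [dI dxe Hap]]]]] := asi_p mp.
have [e e0 ke] := small_mul (normr_ge0 k) eps0.
have [j Hj] := eventually_seq (P := fun c j => forall x,
   `|D (tens (Phi c) p) x - (xi j (r x (tens (Phi c) p)) - eta j (l (tens (Phi c) p) x))|
     <= e * `|x|) (cs := cs) dI (fun c _ => Hap (Phi c) e e0).
have [_ [rfl _]] := dI.
have [K [K0 HK]] := lr_bound.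
exists (fun y => k * xi j (r y (tens (eA i) p))), (fun y => k * eta j (l (tens (eA i) p) y)).
split.
- apply: dualZ; apply: dual_comp (dxe j).1 _ _ _.
  + by move=> *; exact: (bilDl r_bil).
  + by move=> *; exact: (bilZl r_bil).
  + by exists (K * `|tens (eA i) p|) => y; have [_ h] := HK (tens (eA i) p) y.
- apply: dualZ; apply: dual_comp (dxe j).2 _ _ _.
  + by move=> *; exact: (bilDr l_bil).
  + by move=> *; exact: (bilZr l_bil).
  + by exists (K * `|tens (eA i) p|) => y; have [h _] := HK (tens (eA i) p) y.
move=> c cin x.
rewrite (bilZr tens_bil) (bilZr mT_bil) HPhi D_scal -r_assoc HPhi -l_assoc -wcomm HPhi.
rewrite -!mulrBr normrM; apply: le_trans (ler_wpM2l (normr_ge0 k) (Hj j (rfl j) c cin x)) _.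
by rewrite mulrA; apply: ler_wpM2r.
Qed.

Lemma sum_approx (i : IA) n (c : nat -> C) (p : nat -> B) :
  (forall k, c k != 0 -> exists x0, idem_at ev (p k) x0) ->
  forall (cs : seq T) (eps : C), 0 < eps -> exists xi eta : X -> C,
  [/\ dual_elt xi, dual_elt eta & forall t, t \in cs -> forall x,
    `|D (mT t (tens (eA i) (\sum_(k < n) c k *: p k))) x - (xi (r x t) - eta (l t x))|
      <= eps * `|x|].
Proof.
move=> hp cs; elim: n => [|n IH] eps eps0.
  exists (fun _ => 0), (fun _ => 0); split; [exact: dual0|exact: dual0|].
  move=> t _ x; rewrite big_ord0 (bil0r tens_bil) (bil0r mT_bil) D0 !subrr normr0.
  by rewrite mulr_ge0 // ltW.
have e2 : 0 < eps / 2 by rewrite divr_gt0.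
have [xi1 [eta1 [d1 e1 H1]]] := IH _ e2.
have [xi0 [eta0 [d0 e0 H0]]] : exists xi eta : X -> C,
  [/\ dual_elt xi, dual_elt eta & forall t, t \in cs -> forall x,
    `|D (mT t (tens (eA i) (c n *: p n))) x - (xi (r x t) - eta (l t x))| <= eps / 2 * `|x|].
  case: (eqVneq (c n) 0) => cn.
    exists (fun _ => 0), (fun _ => 0); split; [exact: dual0|exact: dual0|].
    move=> t _ x; rewrite cn scale0r (bil0r tens_bil) (bil0r mT_bil) D0 !subrr normr0.
    by rewrite mulr_ge0 // ltW.
  have [x0 ip] := hp n cn; exact: (@term_approx i (c n) (p n) x0 ip cs (eps / 2) e2).
exists (fun y => xi1 y + xi0 y), (fun y => eta1 y + eta0 y); split; [exact: dualD|exact: dualD|].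
move=> t tin x; rewrite big_ord_recr /= (bilDr tens_bil) (bilDr mT_bil) D_add.
set a1 := D _ x; set a0 := D _ x.
have -> : a1 + a0 - (xi1 (r x t) + xi0 (r x t) - (eta1 (l t x) + eta0 (l t x))) =
  (a1 - (xi1 (r x t) - eta1 (l t x))) + (a0 - (xi0 (r x t) - eta0 (l t x))) by ring.
rewrite [eps]splitr mulrDl; apply: le_trans (ler_normD _ _) _.
by apply: lerD; [exact: H1|exact: H0].
Qed.

Lemma L_approx (cs : seq T) (eps : C) : 0 < eps -> exists xi eta : X -> C,
  [/\ dual_elt xi, dual_elt eta & forall t, t \in cs -> forall x,
    `|D t x - (xi (r x t) - eta (l t x))| <= eps * `|x|].
Proof.
move=> eps0; have [KD [KD0 HKD]] := D_bound.
have e2 : 0 < eps / 2 by rewrite divr_gt0.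
have [dl dl0 Kdl] := small_mul KD0 e2.
have [g Hg] := eventually_seq (P := fun t g => `|t - mT t (wg g)| <= dl) (cs := cs) dP
  (fun t _ => Pg_all t dl0).
have [_ [rfl _]] := dP.
have [n [c [p [uE hp]]]] := decomp hB (fB g.2).
have [xi [eta [dx de H]]] := @sum_approx g.1 n c p hp cs _ e2.
exists xi, eta; split => // t tin x.
have Hgt := Hg g (rfl g) t tin.
have H' := H t tin x; rewrite -uE in H'.
have -> : D t x - (xi (r x t) - eta (l t x)) =
   D (t - mT t (wg g)) x + (D (mT t (wg g)) x - (xi (r x t) - eta (l t x))).
  by rewrite DB; ring.
rewrite [eps]splitr mulrDl; apply: le_trans (ler_normD _ _) _.
apply: lerD; last exact: H'.
apply: le_trans (HKD _ _) _; apply: ler_wpM2r => //; apply: le_trans Kdl.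
exact: ler_wpM2l.
Qed.

Lemma main_asi : approx_semi_inner l r D.
Proof.
pose I := (seq T * {e : C | 0 < e})%type.
pose le (i j : I) := {subset i.1 <= j.1} /\ sval j.2 <= sval i.2.
have ch : forall i : I, exists pr : (X -> C) * (X -> C),
  [/\ dual_elt pr.1, dual_elt pr.2 & forall t, t \in i.1 -> forall x,
    `|D t x - (pr.1 (r x t) - pr.2 (l t x))| <= sval i.2 * `|x|].
  move=> [cs [e e0]]; have [xi [eta [? ? ?]]] := L_approx cs e0; by exists (xi, eta).
have [f Hf] := choice ch.
exists I, le, (fun i => (f i).1), (fun i => (f i).2); split.
- split; first exact: (inhabits ([::], exist _ 1 ltr01)).
  split; first by move=> i; split.
  split; first by move=> i j k [s1 l1] [s2 l2]; split; [move=> y /s1 /s2|exact: le_trans l2 l1].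
  move=> [cs1 [e1 p1]] [cs2 [e2 p2]].
  exists (cs1 ++ cs2, if e1 <= e2 then exist _ e1 p1 else exist _ e2 p2) => /=.
  have h' : ~~ (e1 <= e2) -> e2 <= e1.
    by move=> hn; apply: ltW; rewrite real_ltNge ?hn ?gtr0_real.
  case: ifP => h.
    split; split => /=.
    + by move=> y yc; rewrite mem_cat yc.
    + exact: lexx.
    + by move=> y yc; rewrite mem_cat yc orbT.
    + by rewrite h.
  split; split => /=.
  + by move=> y yc; rewrite mem_cat yc.
  + exact: h' (negbT h).
  + by move=> y yc; rewrite mem_cat yc orbT.
  + exact: lexx.
- by move=> i; have [? ? _] := Hf i.
- move=> c eps eps0; exists ([:: c], exist _ eps eps0) => i [sub le_e] x.
  have [_ _ H] := Hf i; apply: le_trans (H c (sub c (mem_head _ _)) x) _.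
  exact: ler_wpM2r.
Qed.

End Main.

Theorem theorem5p6 (R : realType) (A B T : completeNormedModType R[i])
    (mA : A -> A -> A) (mB : B -> B -> B) (mT : T -> T -> T)
    (S : Type) (ev : B -> S -> R[i]) (tens : A -> B -> T) :
  banach_algebra mA -> approx_semi_amenable mA -> has_central_mbai mA ->
  banach_function_algebra mB ev -> has_finsupp_mbai mB ev ->
  projective_tensor_product mA mB mT tens ->
  approx_semi_amenable mT.
Proof.
move=> hA asA [IA [leA [eA [dA aiA cA]]]] hB [IB [leB [uB [dB aiB fB]]]] hT X l r D hX hD.
exact: (main_asi hA hB hT dA aiA cA dB aiB fB hX hD asA).
Qed.
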